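(* Let $r\ge6$ be a composite integer, written as $r=2^ep_z^{e_z}\cdots p_1^{e_1}$ with $e\ge0$, $z\ge0$, $p_1>\dots>p_z$ distinct odd primes and $e_j\ge1$. Let $q$ be a prime power, with $q\ge3$ if $r$ is even, and let $k\ge1$. Put $\ell_j=(p_j-3)/2$, $\Pi_j=\prod_{h=1}^jp_h^{e_h}$ ($\Pi_0=1$), and $$N_r(k,q)=\prod_{j=1}^{z}\prod_{i=1}^{e_j}\frac{q^{p_j^{i-1}\Pi_{j-1}k}\big(q^{(\ell_j+1)p_j^{i-1}\Pi_{j-1}k}-1\big)\big(q^{p_j^{i}\Pi_{j-1}k}-1\big)}{q^{p_j^{i-1}\Pi_{j-1}k}-1}\cdot\prod_{i=1}^{e}\left(\left\lfloor\frac{q-1}{2}\right\rfloor\frac{q^{2^i\Pi_zk}-1}{q-1}\right)$$ (empty products equal $1$), and $$S_3(rk,k,q)=q^k\,\frac{q^{(\ell+1)k}-1}{q^k-1}\,(q^{rk}-1),\qquad \ell=\left\lceil r/2\right\rceil-2.$$ Then $S_3(rk,k,q)/N_r(k,q)\to0$ as $k\to\infty$ with $q$ fixed, and also as $q\to\infty$ (over admissible prime powers) with $k$ fixed. If moreover $r$ is odd, write $r=2h+1$ and put $$S_4(rk,k,q)=h\left((q^k-1)^h(q^{rk}-1)+\frac{(q^k-1)^{h-1}(q^{rk}-1)}{q-1}\right),\qquad S_5(rk,k,q)=hq^k(q^k-1)^{h-1}(q^{rk}-1)+\frac{q^{rk}-1}{q^k-1};$$ then $S_4(rk,k,q)/N_r(k,q)\to0$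 and $S_5(rk,k,q)/N_r(k,q)\to0$ both as $k\to\infty$ with $q$ fixed and as $q\to\infty$ with $k$ fixed.
   Context: $N_r(k,q)$ is the cardinality of the paper's cyclic subspace codes in the Grassmannian of $k$-dimensional $\mathbb{F}_q$-subspaces of $\mathbb{F}_{q^{rk}}$ with minimum distance $2k-2$, and $S_3,S_4,S_5$ are the sizes of previously known codes with the same parameters; the statement is purely a comparison of these explicit functions. *)

(* Defs.v *)
From HB Require Import structures.
From mathcomp Require Import all_boot all_order all_algebra.
From mathcomp Require Import all_classical all_reals all_analysis.
Set Implicit Arguments. Unset Strict Implicit. Unset Printing Implicit Defensive.
Import Order.TTheory GRing.Theory Num.Theory.
Local Open Scope ring_scope.

(* odd prime divisors of r, listed in decreasing order: p_1 > ... > p_z *)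
Definition oddps (r : nat) : seq nat := rev [seq p <- primes r | odd p].

Definition Pi (r j : nat) : nat := (\prod_(p <- take j (oddps r)) p ^ logn p r)%N.

Definition prime_power (q : nat) : Prop :=
  exists p n : nat, prime p /\ (0 < n)%N /\ q = (p ^ n)%N.

Definition admissible (r q : nat) : Prop := prime_power q /\ (odd r \/ (3 <= q)%N).

Section Sizes.
Variable R : realType.

Definition qp (q n : nat) : R := (q%:R : R) ^+ n.

(* factor for the odd prime p = p_{j}, 1-indexed exponent i, Pj = Pi_{j-1} *)
Definition Nfac (p i Pj k q : nat) : R :=
  let a := (p ^ i.-1 * Pj * k)%N in
  let l := ((p - 3) %/ 2)%N in
  qp q a * (qp q ((l + 1) * a) - 1) * (qp q (p ^ i * Pj * k) - 1) / (qp q a - 1).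

Definition Nr (r k q : nat) : R :=
  let ps := oddps r in
  (\prod_(j < size ps)
      \prod_(1 <= i < (logn (nth 0 ps j) r).+1) Nfac (nth 0 ps j) i (Pi r j) k q)
  * \prod_(1 <= i < (logn 2 r).+1)
      (((q - 1) %/ 2)%N%:R * (qp q (2 ^ i * Pi r (size ps) * k) - 1) / (q%:R - 1)).

Definition S3 (r k q : nat) : R :=
  let l := (uphalf r - 2)%N in
  qp q k * (qp q ((l + 1) * k) - 1) / (qp q k - 1) * (qp q (r * k) - 1).

Definition S4 (r k q : nat) : R :=
  let h := r./2 in
  h%:R * ((qp q k - 1) ^+ h * (qp q (r * k) - 1)
          + (qp q k - 1) ^+ h.-1 * (qp q (r * k) - 1) / (q%:R - 1)).

Definition S5 (r k q : nat) : R :=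
  let h := r./2 in
  h%:R * qp q k * (qp q k - 1) ^+ h.-1 * (qp q (r * k) - 1)
  + (qp q (r * k) - 1) / (qp q k - 1).

End Sizes.

(* Main.v *)
Require Import Defs.
From HB Require Import structures.
From mathcomp Require Import all_boot all_order all_algebra.
From mathcomp Require Import all_classical all_reals all_analysis.
From mathcomp Require Import zify ring lra.
Import Order.TTheory GRing.Theory Num.Theory numFieldTopology.Exports numFieldNormedType.Exports.
Local Open Scope classical_set_scope.
Local Open Scope nat_scope.

Lemma coef_odd p : odd p -> 3 <= p -> 2 * (1 + (p - 3) %/ 2 + p) = 3 * p - 1.
Proof. move=> op p3. have := odd_double_half p. rewrite op -addnn /=. lia. Qed.

Lemma block_ineq (p e P : nat) : 3 <= p -> odd p -> 1 <= P ->
  3 * (p ^ e * P) + 2 * e <=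
  2 * (\sum_(1 <= i < e.+1) (1 + (p - 3) %/ 2 + p) * p ^ (i - 1) * P) + 3 * P.
Proof.
move=> p3 op P1; have hc := coef_odd p op p3.
elim: e => [|e IH]; first by rewrite big_geq // expn0 mul1n; lia.
rewrite big_nat_recr //= subSS subn0.
have hX : 1 <= p ^ e * P by rewrite muln_gt0 expn_gt0; lia.
rewrite expnS.
set c := 1 + (p - 3) %/ 2 + p in hc *.
set S := \sum_(1 <= i < e.+1) _ in IH *.
set X := p ^ e * P in hX IH *.
have -> : p * p ^ e * P = p * X by rewrite /X mulnA.
have -> : c * p ^ e * P = c * X by rewrite /X mulnA.
nia.
Qed.

Lemma mem_oddps r p : p \in oddps r -> [/\ prime p, odd p, 0 < r & p %| r].
Proof.
rewrite /oddps mem_rev mem_filter mem_primes => /andP[op /and3P[pp r0 d]].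
by [].
Qed.

Definition ps r := oddps r.
Definition pj r j := nth 0 (oddps r) j.
Definition ej r j := logn (pj r j) r.

Lemma pj_prop r j : j < size (oddps r) ->
  [/\ prime (pj r j), odd (pj r j), 3 <= pj r j & 1 <= ej r j].
Proof.
move=> hj; have /mem_oddps[pp op r0 d] := mem_nth 0 hj.
rewrite /ej /pj; split => //.
  have := prime_gt1 pp; move: op; case: (nth 0 (oddps r) j) => [|[|[|n]]] //.
by rewrite logn_gt0 mem_primes pp r0 d.
Qed.

Lemma PiS r j : j < size (oddps r) -> Pi r j.+1 = Pi r j * pj r j ^ ej r j.
Proof.
by move=> hj; rewrite /Pi (take_nth 0) // -cats1 big_cat big_seq1.
Qed.

Lemma Pi0 r : Pi r 0 = 1.
Proof. by rewrite /Pi take0 big_nil. Qed.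

Lemma Pi_gt0 r j : 0 < Pi r j.
Proof.
rewrite /Pi; apply: prodn_gt0 => p; rewrite expn_gt0.
by case: p => //= ; rewrite lognE.
Qed.

Lemma r_decomp r : 0 < r -> r = 2 ^ logn 2 r * Pi r (size (oddps r)).
Proof.
move=> r0.
have hodd : Pi r (size (oddps r)) = \prod_(p <- primes r | odd p) p ^ logn p r.
  by rewrite /Pi take_size /oddps big_rev big_filter.
have hall : r = \prod_(p <- primes r) p ^ logn p r.
  by rewrite {1}(prod_prime_decomp r0) prime_decompE big_map.
rewrite hodd {1}hall (bigID (fun p => odd p)) /= mulnC; congr (_ * _).
have hf : [seq p <- primes r | ~~ odd p] = [seq p <- primes r | p == 2].
  apply: eq_in_filter => p; rewrite mem_primes => /and3P[pp _ _].
  by apply/idP/eqP => [/(prime_oddPn pp)|->].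
rewrite -big_filter hf.
case h2: (2 \in primes r).
  by rewrite (filter_pred1_uniq (primes_uniq r) h2) big_seq1.
have -> : logn 2 r = 0 by apply/eqP; rewrite -leqn0 leqNgt logn_gt0 h2.
rewrite big1_seq // => i; rewrite mem_filter => /andP[_ /andP[/eqP -> h]].
by rewrite h2 in h.
Qed.

Definition Bj r j := \sum_(1 <= i < (ej r j).+1)
   (1 + (pj r j - 3) %/ 2 + pj r j) * pj r j ^ (i - 1) * Pi r j.

Lemma outer_ineq r n : n <= size (oddps r) ->
  3 * Pi r n + 2 * (\sum_(j < n) ej r j) <= 2 * (\sum_(j < n) Bj r j) + 3.
Proof.
elim: n => [|n IH] hn; first by rewrite Pi0 !big_ord0.
have hn' : n < size (oddps r) by [].
have [pp op p3 e1] := pj_prop r n hn'.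
have := block_ineq (pj r n) (ej r n) (Pi r n) p3 op (Pi_gt0 r n).
rewrite !big_ord_recr /= (PiS r n hn') -/(Bj r n).
have := IH (ltnW hn).
set X := pj r n ^ ej r n * Pi r n.
have -> : Pi r n * pj r n ^ ej r n = X by rewrite /X mulnC.
set A := \sum_(j < n) ej r j; set B := \sum_(j < n) Bj r j. lia.
Qed.

Lemma E2_eq e o : \sum_(1 <= i < e.+1) 2 ^ i * o + 2 * o = 2 ^ e.+1 * o.
Proof.
elim: e => [|e IH]; first by rewrite big_geq.
rewrite big_nat_recr //= [2 ^ e.+2]expnS; nia.
Qed.

Lemma deg_ineq r : 6 <= r -> ~~ prime r ->
  r + uphalf r <= \sum_(j < size (oddps r)) Bj r j
                  + \sum_(1 <= i < (logn 2 r).+1) 2 ^ i * Pi r (size (oddps r)).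
Proof.
move=> r6 npr.
have r0 : 0 < r by lia.
have hdec := r_decomp r r0.
have hout := outer_ineq r (size (oddps r)) (leqnn _).
have hE2 := E2_eq (logn 2 r) (Pi r (size (oddps r))).
have hO : size (oddps r) <= \sum_(j < size (oddps r)) ej r j.
  rewrite -[X in X <= _]card_ord -sum1_card; apply: leq_sum => j _.
  by have [] := pj_prop r j (ltn_ord j).
have hu : uphalf r + uphalf r = r + odd r.
  rewrite uphalf_half. have := odd_double_half r. rewrite -addnn. lia.
have ho := Pi_gt0 r (size (oddps r)).
move: hdec hout hE2 hO hu ho.
set z := size (oddps r); set o := Pi r z; set e := logn 2 r.
set E1 := \sum_(j < z) Bj r j; set Om := \sum_(j < z) ej r j.
set E2 := \sum_(1 <= i < e.+1) _.
move=> hdec hout hE2 hO hu ho.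
case: (boolP (odd r)) => hodd.
  have e0 : e = 0.
    apply/eqP; rewrite -leqn0 leqNgt logn_gt0 mem_primes /= r0 /= dvdn2.
    by rewrite hodd.
  have E20 : E2 = 0 by rewrite /E2 e0 big_geq.
  rewrite e0 expn0 mul1n in hdec.
  have hOm : 2 <= Om.
    case hz: z => [|[|z']]; last by rewrite hz in hO; lia.
      have : o = 1 by rewrite /o hz Pi0.
      lia.
    have hz0 : 0 < size (oddps r) by rewrite -/z hz.
    have [pp _ _ e1] := pj_prop r 0 hz0.
    have hO1 : Om = ej r 0 by rewrite /Om hz big_ord1.
    have : o = pj r 0 ^ ej r 0 by rewrite /o hz (PiS r 0 hz0) Pi0 mul1n.
    case he: (ej r 0) e1 => [|[|e']] // _ ho1; last by lia.
    by rewrite hdec ho1 expn1 pp in npr.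
  lia.
have e1 : 0 < e.
  rewrite logn_gt0 mem_primes /= r0 /= dvdn2; by rewrite hodd.
have h2e : 2 <= 2 ^ e by rewrite -{1}(expn1 2) leq_pexp2l.
case hz: z => [|z'].
  have o1 : o = 1 by rewrite /o hz Pi0.
  have E10 : E1 = 0 by rewrite /E1 hz big_ord0.
  have : 2 ^ e.+1 = 2 * 2 ^ e by rewrite expnS.
  nia.
rewrite hz in hO.
have : 2 ^ e.+1 = 2 * 2 ^ e by rewrite expnS.
nia.
Qed.

Local Open Scope ring_scope.

Section Real.
Variable R : realType.

Lemma prod_lb (I : eqType) (s : seq I) (F : I -> R) (d : I -> nat) (c : I -> R) (x : R) :
  0 <= x -> (forall i, 0 < c i) -> (forall i, i \in s -> x ^+ d i / c i <= F i) ->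
  x ^+ (\sum_(i <- s) d i)%N / \prod_(i <- s) c i <= \prod_(i <- s) F i.
Proof.
move=> x0 cp; elim: s => [|a s IH] h; first by rewrite !big_nil expr0 invr1 mulr1.
rewrite !big_cons exprD invfM mulrACA.
apply: ler_pM.
- by apply: divr_ge0; [exact: exprn_ge0 | exact: ltW].
- apply: divr_ge0; [exact: exprn_ge0 | apply: ltW; exact: prodr_gt0].
- by apply: h; rewrite mem_head.
- by apply: IH => i hi; apply: h; rewrite in_cons hi orbT.
Qed.

Lemma Nfac_lb p i P k q : (1 <= p)%N -> (1 <= i)%N -> (1 <= P)%N -> (1 <= k)%N -> (2 <= q)%N ->
  (q%:R : R) ^+ ((1 + (p - 3) %/ 2 + p) * p ^ (i - 1) * P * k) / 2 <= Nfac R p i P k q.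
Proof.
move=> p1 i1 P1 k1 q2; rewrite /Nfac /qp subn1.
set l := ((p - 3) %/ 2)%N; set a := (p ^ i.-1 * P * k)%N.
have a1 : (1 <= a)%N by rewrite /a !muln_gt0 expn_gt0; lia.
have e1 : ((1 + l + p) * p ^ i.-1 * P * k = a * (1 + l + p))%N by rewrite /a; ring.
have e2 : ((l + 1) * a = a * (l + 1))%N by rewrite mulnC.
have e3 : (p ^ i * P * k = a * p)%N.
  by rewrite /a -{1}(prednK i1) expnS; ring.
rewrite e1 e2 e3; clearbody a; rewrite !exprM.
set x := (q%:R : R).
have x2 : 2 <= x by rewrite /x ler_nat.
set X := x ^+ a.
have X2 : 2 <= X by apply: (le_trans x2); apply: ler_eXnr => //; lra.
have Xp : 2 <= X ^+ p by apply: (le_trans X2); apply: ler_eXnr => //; lra.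
have G : X ^+ l <= (X ^+ (l + 1) - 1) / (X - 1).
  rewrite ler_pdivlMr; last by lra.
  rewrite mulrBr mulr1 addn1 exprSr; apply: lerB => //; apply: exprn_ege1; lra.
have Xl : 0 <= X ^+ l by apply: exprn_ge0; lra.
have -> : X * (X ^+ (l + 1) - 1) * (X ^+ p - 1) / (X - 1)
          = X * ((X ^+ (l + 1) - 1) / (X - 1)) * (X ^+ p - 1) by rewrite mulrAC -!mulrA.
have -> : X ^+ (1 + l + p) / 2 = X * X ^+ l * (X ^+ p / 2).
  by rewrite !exprD expr1 !mulrA.
apply: ler_pM.
- by apply: mulr_ge0 => //; lra.
- by apply: divr_ge0; [apply: exprn_ge0; lra|lra].
- by apply: ler_wpM2l => //; lra.
- lra.
Qed.

Lemma F2_lb m q : (1 <= m)%N -> (3 <= q)%N ->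
  (q%:R : R) ^+ m / 6 <= ((q - 1) %/ 2)%N%:R * ((q%:R : R) ^+ m - 1) / (q%:R - 1).
Proof.
move=> m1 q3.
have ht : ((q - 1) <= 3 * ((q - 1) %/ 2))%N.
  have := divn_eq (q - 1) 2; have := ltn_pmod (q - 1) (isT : (0 < 2)%N); lia.
set t := ((q - 1) %/ 2)%N in ht *.
have htR : (q%:R : R) - 1 <= 3 * t%:R.
  have hq1 : (1 <= q)%N by lia.
  have h : (((q - 1)%N)%:R : R) <= ((3 * t)%N)%:R by rewrite ler_nat.
  by move: h; rewrite natrB // natrM.
set x := (q%:R : R) in htR *.
have x3 : 3 <= x by rewrite /x ler_nat.
have t0 : 0 <= (t%:R : R) by [].
set Y := x ^+ m.
have Y3 : 3 <= Y by apply: (le_trans x3); apply: ler_eXnr => //; lra.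
rewrite ler_pdivlMr; last by lra.
have h1 : 0 <= (3 * t%:R - (x - 1)) * Y by apply: mulr_ge0; lra.
have h2 : 0 <= t%:R * (Y - 2) by apply: mulr_ge0; lra.
nra.
Qed.

Lemma X_ge2 q k : (2 <= q)%N -> (1 <= k)%N -> 2 <= (q%:R : R) ^+ k.
Proof.
move=> q2 k1; have x2 : 2 <= (q%:R : R) by rewrite ler_nat.
by apply: (le_trans x2); apply: ler_eXnr => //; lra.
Qed.

Lemma S3_ub r k q : (6 <= r)%N -> (2 <= q)%N -> (1 <= k)%N ->
  0 <= S3 R r k q <= 2 * (q%:R : R) ^+ ((r + uphalf r - 1) * k).
Proof.
move=> r6 q2 k1; rewrite /S3 /qp.
have hu : (uphalf r + uphalf r = r + odd r)%N.
  rewrite uphalf_half. have := odd_double_half r. rewrite -addnn. lia.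
set u := uphalf r in hu *.
have ex : ((r + u - 1) * k = k * (1 + (u - 2) + r))%N.
  have -> : (r + u - 1 = 1 + (u - 2) + r)%N by case: (odd r) hu; lia.
  by rewrite mulnC.
rewrite ex [((u - 2 + 1) * k)%N]mulnC [(r * k)%N]mulnC !exprM.
have X2 := X_ge2 q k q2 k1.
set X := (q%:R : R) ^+ k in X2 *.
set l := (u - 2)%N.
have G : (X ^+ (l + 1) - 1) / (X - 1) <= 2 * X ^+ l.
  rewrite ler_pdivrMr; last by lra.
  rewrite addn1 exprSr.
  have Z1 : 1 <= X ^+ l by apply: exprn_ege1; lra.
  have : 0 <= (X ^+ l) * (X - 2) by apply: mulr_ge0; lra.
  nra.
have G0 : 0 <= (X ^+ (l + 1) - 1) / (X - 1).
  apply: divr_ge0; last by lra.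
  have : 1 <= X ^+ (l + 1) by apply: exprn_ege1; lra.
  lra.
have Y1 : 1 <= X ^+ r by apply: exprn_ege1; lra.
have Y0 : 0 <= X ^+ r - 1 by lra.
have -> : X * (X ^+ (l + 1) - 1) / (X - 1) * (X ^+ r - 1)
          = X * ((X ^+ (l + 1) - 1) / (X - 1)) * (X ^+ r - 1) by rewrite mulrA.
apply/andP; split.
  by apply: mulr_ge0 => //; apply: mulr_ge0 => //; lra.
have -> : 2 * X ^+ (1 + l + r) = X * (2 * X ^+ l) * X ^+ r.
  by rewrite !exprD expr1; ring.
apply: ler_pM => //; first by apply: mulr_ge0 => //; lra.
  by apply: ler_wpM2l => //; lra.
lra.
Qed.

Lemma powle (a b : R) n : 0 <= a -> a <= b -> a ^+ n <= b ^+ n.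
Proof.
move=> a0 ab; apply: lerXn2r => //; rewrite ?nnegrE //; exact: le_trans ab.
Qed.

Lemma uphalf_odd r : odd r -> uphalf r = (r./2).+1.
Proof. by move=> o; rewrite uphalf_half o. Qed.

Lemma S4_ub r k q : (6 <= r)%N -> odd r -> (2 <= q)%N -> (1 <= k)%N ->
  0 <= S4 R r k q <= 2 * (r./2)%:R * (q%:R : R) ^+ ((r + uphalf r - 1) * k).
Proof.
move=> r6 o q2 k1; rewrite /S4 /qp (uphalf_odd r o).
set h := r./2.
have ex : ((r + h.+1 - 1) * k = k * (h + r))%N by rewrite mulnC; congr (_ * _); lia.
rewrite ex [(r * k)%N]mulnC !exprM.
have X2 := X_ge2 q k q2 k1.
have x2 : 2 <= (q%:R : R) by rewrite ler_nat.
have y1 : 1 <= (q%:R : R) - 1 by lra.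
set y := (q%:R : R) - 1 in y1 *.
set X := (q%:R : R) ^+ k in X2 *.
have Y1 : 1 <= X ^+ r by apply: exprn_ege1; lra.
have Xh1 : 1 <= X ^+ h by apply: exprn_ege1; lra.
set Y := X ^+ r - 1.
have Y0 : 0 <= Y by rewrite /Y; lra.
have YX : Y <= X ^+ r by rewrite /Y; lra.
have W0 : 0 <= X - 1 by lra.
have WX : X - 1 <= X by lra.
set W := X - 1 in W0 WX *.
have h0 : 0 <= (h%:R : R) by [].
have T1 : W ^+ h * Y <= X ^+ h * X ^+ r.
  apply: ler_pM => //; [exact: exprn_ge0 | exact: powle].
have T20 : 0 <= W ^+ h.-1 * Y / y.
  by apply: divr_ge0; [apply: mulr_ge0 => //; exact: exprn_ge0 | lra].
have T2 : W ^+ h.-1 * Y / y <= X ^+ h * X ^+ r.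
  have A0 : 0 <= W ^+ h.-1 * Y by apply: mulr_ge0 => //; exact: exprn_ge0.
  apply: (@le_trans _ _ (W ^+ h.-1 * Y)).
    by rewrite ler_pdivrMr; [apply: ler_peMr | lra].
  apply: ler_pM => //; first exact: exprn_ge0.
  apply: (le_trans (powle W X h.-1 W0 WX)); apply: ler_weXn2l; [lra | exact: leq_pred].
have T10 : 0 <= W ^+ h * Y by apply: mulr_ge0 => //; exact: exprn_ge0.
apply/andP; split; first by apply: mulr_ge0 => //; lra.
rewrite exprD.
apply: (@le_trans _ _ (h%:R * (X ^+ h * X ^+ r + X ^+ h * X ^+ r))).
  by apply: ler_wpM2l => //; lra.
by rewrite le_eqVlt; apply/orP; left; apply/eqP; ring.
Qed.

Lemma S5_ub r k q : (6 <= r)%N -> odd r -> (2 <= q)%N -> (1 <= k)%N ->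
  0 <= S5 R r k q <= ((r./2)%:R + 1) * (q%:R : R) ^+ ((r + uphalf r - 1) * k).
Proof.
move=> r6 o q2 k1; rewrite /S5 /qp (uphalf_odd r o).
set h := r./2.
have h1 : (1 <= h)%N by rewrite /h; have := odd_double_half r; rewrite -addnn; lia.
have ex : ((r + h.+1 - 1) * k = k * (h + r))%N by rewrite mulnC; congr (_ * _); lia.
rewrite ex [(r * k)%N]mulnC !exprM.
have X2 := X_ge2 q k q2 k1.
set X := (q%:R : R) ^+ k in X2 *.
have Y1 : 1 <= X ^+ r by apply: exprn_ege1; lra.
have Xh1 : 1 <= X ^+ h by apply: exprn_ege1; lra.
set Y := X ^+ r - 1.
have Y0 : 0 <= Y by rewrite /Y; lra.
have YX : Y <= X ^+ r by rewrite /Y; lra.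
have W0 : 0 <= X - 1 by lra.
have W1 : 1 <= X - 1 by lra.
have WX : X - 1 <= X by lra.
set W := X - 1 in W0 W1 WX *.
have h0 : 0 <= (h%:R : R) by [].
have XW : X * W ^+ h.-1 <= X ^+ h.
  rewrite -{2}(prednK h1) exprS; apply: ler_wpM2l; [lra | exact: powle].
have T1 : h%:R * X * W ^+ h.-1 * Y <= h%:R * (X ^+ h * X ^+ r).
  rewrite -!mulrA; apply: ler_wpM2l => //; rewrite mulrA.
  apply: ler_pM => //; apply: mulr_ge0; [lra | exact: exprn_ge0].
have T10 : 0 <= h%:R * X * W ^+ h.-1 * Y.
  by apply: mulr_ge0 => //; apply: mulr_ge0; [apply: mulr_ge0 => //; lra | exact: exprn_ge0].
have T2 : Y / W <= X ^+ h * X ^+ r.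
  apply: (@le_trans _ _ Y); first by rewrite ler_pdivrMr; [apply: ler_peMr | lra].
  apply: (le_trans YX); apply: ler_peMl => //; lra.
have T20 : 0 <= Y / W by apply: divr_ge0.
apply/andP; split; first by lra.
rewrite exprD.
have -> : ((h%:R + 1) * (X ^+ h * X ^+ r)) = h%:R * (X ^+ h * X ^+ r) + X ^+ h * X ^+ r by ring.
lra.
Qed.

Definition C1 r : R := \prod_(j < size (oddps r)) \prod_(1 <= i < (ej r j).+1) (2:R).
Definition C2 r : R := \prod_(1 <= i < (logn 2 r).+1) (6:R).
Definition CN r : R := C1 r * C2 r.

Lemma C1_gt0 r : 0 < C1 r.
Proof. by rewrite /C1; apply: prodr_gt0 => j _; apply: prodr_gt0. Qed.

Lemma C2_gt0 r : 0 < C2 r.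
Proof. by rewrite /C2; apply: prodr_gt0. Qed.

Lemma CN_gt0 r : 0 < CN r.
Proof. by rewrite /CN; apply: mulr_gt0; [exact: C1_gt0 | exact: C2_gt0]. Qed.

Lemma adm_q2 r q : admissible r q -> (2 <= q)%N.
Proof.
case=> [[p [n [pp [n0 ->]]]] _].
apply: (leq_trans (prime_gt1 pp)); rewrite -{1}(expn1 p) leq_pexp2l //.
exact: prime_gt0.
Qed.

Lemma N_lb r k q : (6 <= r)%N -> ~~ prime r -> admissible r q -> (1 <= k)%N ->
  (q%:R : R) ^+ ((r + uphalf r - 1) * k) * (q%:R : R) ^+ k / CN r <= Nr R r k q.
Proof.
move=> r6 npr hadm k1.
have q2 := adm_q2 r q hadm.
have x0 : 0 <= (q%:R : R) by [].
have x1 : 1 <= (q%:R : R) by rewrite ler1n; lia.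
set D1 := (\sum_(j < size (oddps r)) \sum_(1 <= i < (ej r j).+1)
            ((1 + (pj r j - 3) %/ 2 + pj r j) * pj r j ^ (i - 1) * Pi r j * k))%N.
set D2 := (\sum_(1 <= i < (logn 2 r).+1) (2 ^ i * Pi r (size (oddps r)) * k))%N.
have hP1 : (q%:R : R) ^+ D1 / C1 r <=
   \prod_(j < size (oddps r)) \prod_(1 <= i < (logn (nth 0 (oddps r) j) r).+1)
        Nfac R (nth 0 (oddps r) j) i (Pi r j) k q.
  apply: prod_lb => // [j|j _]; first by apply: prodr_gt0.
  apply: prod_lb => // i; rewrite mem_index_iota => /andP[i1 _].
  have [_ _ p3 _] := pj_prop r j (ltn_ord j).
  apply: Nfac_lb => //; [lia | exact: Pi_gt0].
have hP2 : (q%:R : R) ^+ D2 / C2 r <=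
   \prod_(1 <= i < (logn 2 r).+1)
      (((q - 1) %/ 2)%N%:R * ((q%:R : R) ^+ (2 ^ i * Pi r (size (oddps r)) * k) - 1)
        / (q%:R - 1)).
  apply: prod_lb => // i; rewrite mem_index_iota => /andP[i1 ie].
  have q3 : (3 <= q)%N.
    case: hadm => _ [ho|//].
    have : (0 < logn 2 r)%N by lia.
    by rewrite logn_gt0 mem_primes /= dvdn2 ho andbF.
  apply: F2_lb => //.
  by rewrite !muln_gt0 expn_gt0 Pi_gt0 /=; lia.
rewrite /Nr /=.
apply: (le_trans _ (ler_pM _ _ hP1 hP2)); last first.
- by apply: divr_ge0; [exact: exprn_ge0 | apply: ltW; exact: C2_gt0].
- by apply: divr_ge0; [exact: exprn_ge0 | apply: ltW; exact: C1_gt0].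
have hD : ((\sum_(j < size (oddps r)) Bj r j
    + \sum_(1 <= i < (logn 2 r).+1) 2 ^ i * Pi r (size (oddps r))) * k = D1 + D2)%N.
  rewrite mulnDl !big_distrl /=; congr (_ + _).
  by apply: eq_bigr => j _; rewrite /Bj big_distrl.
have hdeg := deg_ineq r r6 npr.
have -> : (q%:R : R) ^+ D1 / C1 r * ((q%:R : R) ^+ D2 / C2 r)
          = (q%:R : R) ^+ (D1 + D2) / CN r by rewrite exprD /CN invfM; ring.
rewrite -hD -exprD; apply: ler_wpM2r.
  by rewrite invr_ge0; apply: ltW; exact: CN_gt0.
apply: ler_weXn2l => //.
rewrite -[X in (_ + X)%N]mul1n -mulnDl leq_mul2r; apply/orP; right.
have : (3 <= uphalf r)%N.
  rewrite uphalf_half; have := odd_double_half r; rewrite -addnn; lia.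
lia.
Qed.

Lemma ratio_bd r k q S C : (6 <= r)%N -> ~~ prime r -> admissible r q -> (1 <= k)%N ->
  0 <= C -> 0 <= S -> S <= C * (q%:R : R) ^+ ((r + uphalf r - 1) * k) ->
  0 <= S / Nr R r k q <= C * CN r / (q%:R : R) ^+ k.
Proof.
move=> r6 npr hadm k1 C0 S0 hS.
have q2 := adm_q2 r q hadm.
have x0 : 0 < (q%:R : R) by rewrite ltr0n; lia.
have NL := N_lb r k q r6 npr hadm k1.
have CN0 := CN_gt0 r.
set a := ((r + uphalf r - 1) * k)%N in hS NL *.
set x := (q%:R : R) in x0 NL hS *.
have xa : 0 < x ^+ a by exact: exprn_gt0.
have xk : 0 < x ^+ k by exact: exprn_gt0.
have L0 : 0 < x ^+ a * x ^+ k / CN r by apply: divr_gt0 => //; apply: mulr_gt0.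
have N0 : 0 < Nr R r k q by exact: lt_le_trans NL.
apply/andP; split; first by apply: divr_ge0 => //; exact: ltW.
rewrite ler_pdivrMr //; apply: (le_trans hS).
have K0 : 0 <= C * CN r / x ^+ k.
  by apply: divr_ge0; [apply: mulr_ge0 => //; exact: ltW | exact: ltW].
apply: (le_trans _ (ler_wpM2l K0 NL)).
rewrite le_eqVlt; apply/orP; left; apply/eqP.
field.
by apply/andP; split; rewrite gt_eqF.
Qed.

Lemma lim_k (f : nat -> R) (K : R) (q : nat) : (2 <= q)%N -> 0 <= K ->
  (forall k, (1 <= k)%N -> 0 <= f k <= K / (q%:R : R) ^+ k) -> f @ \oo --> (0 : R).
Proof.
move=> q2 K0 hf; apply/cvgrPdist_lt => e e0.
apply: filterS2 (nbhs_infty_gtr (K / e)) (nbhs_infty_ge 1) => k hk k1.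
have /andP[f0 fK] := hf k k1.
rewrite sub0r normrN ger0_norm //.
apply: (le_lt_trans fK).
have xk : 0 < (q%:R : R) ^+ k by apply: exprn_gt0; rewrite ltr0n; lia.
rewrite ltr_pdivrMr //.
rewrite ltr_pdivrMr // in hk.
have : (k%:R : R) <= (q%:R : R) ^+ k by rewrite -natrX ler_nat ltnW // ltn_expl.
nra.
Qed.

Lemma lim_q (r k : nat) (f : nat -> R) (K : R) : (1 <= k)%N -> 0 <= K ->
  (forall q, admissible r q -> 0 <= f q <= K / (q%:R : R) ^+ k) ->
  f @ within (admissible r) \oo --> (0 : R).
Proof.
move=> k1 K0 hf; apply/cvgrPdist_lt => e e0.
rewrite near_withinE.
apply: filterS (nbhs_infty_gtr (K / e)) => q hk hadm.
have q2 := adm_q2 r q hadm.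
have /andP[f0 fK] := hf q hadm.
rewrite sub0r normrN ger0_norm //.
apply: (le_lt_trans fK).
have xk : 0 < (q%:R : R) ^+ k by apply: exprn_gt0; rewrite ltr0n; lia.
rewrite ltr_pdivrMr //.
rewrite ltr_pdivrMr // in hk.
have : (q%:R : R) <= (q%:R : R) ^+ k by apply: ler_eXnr => //; rewrite ler1n; lia.
nra.
Qed.

End Real.

Theorem theorem4p1 (R : realType) (r : nat) :
  (6 <= r)%N -> ~~ prime r ->
  (* S3 / N_r -> 0 *)
  (forall q : nat, admissible r q ->
     (fun k : nat => S3 R r k q / Nr R r k q) @ \oo --> (0 : R)) /\
  (forall k : nat, (1 <= k)%N ->
     (fun q : nat => S3 R r k q / Nr R r k q) @ within (admissible r) \oo
       --> (0 : R)) /\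
  (* r odd: S4 / N_r -> 0 and S5 / N_r -> 0 *)
  (odd r ->
    (forall q : nat, admissible r q ->
       (fun k : nat => S4 R r k q / Nr R r k q) @ \oo --> (0 : R)) /\
    (forall k : nat, (1 <= k)%N ->
       (fun q : nat => S4 R r k q / Nr R r k q) @ within (admissible r) \oo
         --> (0 : R)) /\
    (forall q : nat, admissible r q ->
       (fun k : nat => S5 R r k q / Nr R r k q) @ \oo --> (0 : R)) /\
    (forall k : nat, (1 <= k)%N ->
       (fun q : nat => S5 R r k q / Nr R r k q) @ within (admissible r) \oo
         --> (0 : R))).
Proof.
move=> r6 npr.
have key : forall (Sf : nat -> nat -> R) (C : R), 0 <= C ->
   (forall k q, admissible r q -> (1 <= k)%N ->
      0 <= Sf k q <= C * (q%:R : R) ^+ ((r + uphalf r - 1) * k)) ->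
   (forall q, admissible r q -> (fun k => Sf k q / Nr R r k q) @ \oo --> (0 : R)) /\
   (forall k, (1 <= k)%N ->
      (fun q => Sf k q / Nr R r k q) @ within (admissible r) \oo --> (0 : R)).
  move=> Sf C C0 hS.
  have K0 : 0 <= C * CN R r by apply: mulr_ge0 => //; apply: ltW; exact: CN_gt0.
  split.
    move=> q hq; apply: (@lim_k R _ (C * CN R r) q (adm_q2 r q hq) K0) => k k1.
    have /andP[a b] := hS k q hq k1.
    exact: ratio_bd.
  move=> k k1; apply: (@lim_q R r k _ (C * CN R r) k1 K0) => q hq.
  have /andP[a b] := hS k q hq k1.
  exact: ratio_bd.
have c2 : (0:R) <= 2 by lra.
have [h1 h2] := key (fun k q => S3 R r k q) 2 c2
  (fun k q hq k1 => S3_ub R r k q r6 (adm_q2 r q hq) k1).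
split; first exact: h1.
split; first exact: h2.
move=> o.
have [h3 h4] := key (fun k q => S4 R r k q) (2 * (r./2)%:R) (mulr_ge0 c2 (ler0n _ _))
  (fun k q hq k1 => S4_ub R r k q r6 o (adm_q2 r q hq) k1).
have C5 : 0 <= ((r./2)%:R + 1 : R) by apply: addr_ge0.
have [h5 h6] := key (fun k q => S5 R r k q) ((r./2)%:R + 1) C5
  (fun k q hq k1 => S5_ub R r k q r6 o (adm_q2 r q hq) k1).
by split; [|split; [|split]].
Qed.
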